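(* Let $F$ be a nondyadic nonarchimedean local field, $A$ a quaternion $F$-algebra, and $\mathcal O$ a Bass order in $A$ with Eichler invariant $e(\mathcal O)=0$ and $n(\mathcal O)\ge3$. Let $K/F$ be the unique (ramified) quadratic field extension such that $O_K$ embeds into $\mathcal O$, and assume $\mathrm{Nr}(\mathcal N(\mathcal O))=\mathrm{Nm}_{K/F}(K^\times)$. Let $B=O_K$, fix an optimal embedding $\varphi\in\mathrm{Emb}(B,\mathcal O)$, and let $\mathcal E=\{g\in A^\times:\varphi(K)\cap g\mathcal O g^{-1}=\varphi(B)\}$. Then $\mathrm{Nr}(\mathcal E)=\mathrm{Nm}_{K/F}(K^\times)$.
   Context: Nondyadic: residue characteristic $\ne2$. An order is Bass if every overorder (including itself) is Gorenstein (trace dual projective as left module). $n(\mathcal O)$ is the valuation of the reduced discriminant. With $\mathfrak k$ the residue field, the Eichler invariant of $\mathcal O\not\simeq M_2(O_F)$ is $1,0,-1$ according as $\mathcal O/J(\mathcal O)$ is $\mathfrak k\times\mathfrak k$, $\mathfrak k$, or the quadratic field extension of $\mathfrak k$. $\mathcal N(\mathcal O)$ is the normalizer of $\mathcal O$ in $A^\times$; $\mathrm{Nr}$ is the reduced norm. An optimal embedding of an order $B\subset K$ into $\mathcal O$ is an $F$-embedding $\varphi:K\to A$ with $\varphi(K)\cap\mathcal O=\varphi(B)$; $\mathrm{Emb}(B,\mathcal O)$ is their set. *)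

(* Defs.v *)
From mathcomp Require Import all_boot all_order all_algebra.
Set Implicit Arguments. Unset Strict Implicit. Unset Printing Implicit Defensive.
Import Order.TTheory GRing.Theory Num.Theory.
Local Open Scope ring_scope.

Section LocalQuat.
Variable F : fieldType.

Variable v : F -> int.   (* discrete valuation on F^x; v 0 is irrelevant *)

Definition OF (x : F) : Prop := x = 0 \/ 0 <= v x.
Definition mF (x : F) : Prop := x = 0 \/ 0 < v x.

Definition discrete_valuation : Prop :=
  (forall x y, x != 0 -> y != 0 -> v (x * y) = v x + v y) /\
  (forall x y, x != 0 -> y != 0 -> x + y != 0 ->
       Num.min (v x) (v y) <= v (x + y)) /\
  (exists pi, pi != 0 /\ v pi = 1).

Definition vclose (N : int) (x y : F) : Prop := x = y \/ N <= v (x - y).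

Definition vcomplete : Prop :=
  forall u : nat -> F,
    (forall N : int, exists M, forall m n, (M <= m)%N -> (M <= n)%N ->
        vclose N (u m) (u n)) ->
    exists l, forall N : int, exists M, forall n, (M <= n)%N -> vclose N (u n) l.

Definition finite_residue : Prop :=
  exists s : seq F, forall x, OF x -> exists2 r, r \in s & mF (x - r).

Definition nonarch_local_field : Prop :=
  [/\ discrete_valuation, vcomplete & finite_residue].

(* residue characteristic <> 2, i.e. 2 is not in m_F *)
Definition nondyadic : Prop := ~ mF 2.

(* elements t + x i + y j + z ij are row vectors (t,x,y,z) *)
Variables a b : F.
Local Notation A := 'rV[F]_4.

Definition qc (q : A) (k : nat) : F := q ord0 (inord k).
Definition mkq (t x y z : F) : A := \row_(k < 4) nth 0 [:: t; x; y; z] k.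
Definition q1 : A := mkq 1 0 0 0.

(* i^2 = a, j^2 = b, ij = -ji *)
Definition qmul (p q : A) : A :=
  mkq (qc p 0 * qc q 0 + a * qc p 1 * qc q 1 + b * qc p 2 * qc q 2
         - a * b * qc p 3 * qc q 3)
      (qc p 0 * qc q 1 + qc p 1 * qc q 0 - b * qc p 2 * qc q 3
         + b * qc p 3 * qc q 2)
      (qc p 0 * qc q 2 + qc p 2 * qc q 0 + a * qc p 1 * qc q 3
         - a * qc p 3 * qc q 1)
      (qc p 0 * qc q 3 + qc p 3 * qc q 0 + qc p 1 * qc q 2
         - qc p 2 * qc q 1).

Definition qconj (q : A) : A := mkq (qc q 0) (- qc q 1) (- qc q 2) (- qc q 3).
(* reduced norm q * conj q and reduced trace q + conj q (as scalars) *)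
Definition nrd (q : A) : F :=
  qc q 0 ^+ 2 - a * qc q 1 ^+ 2 - b * qc q 2 ^+ 2 + a * b * qc q 3 ^+ 2.
Definition trd (q : A) : F := 2 * qc q 0.

Fixpoint qpow (q : A) (n : nat) : A :=
  if n is n'.+1 then qmul q (qpow q n') else q1.

Definition is_Obasis (O : A -> Prop) (e : 'I_4 -> A) : Prop :=
  (forall c : 'I_4 -> F, \sum_i c i *: e i = 0 -> forall i, c i = 0) /\
  (forall x, O x <-> exists c : 'I_4 -> F,
                      (forall i, OF (c i)) /\ x = \sum_i c i *: e i).

Definition is_order (O : A -> Prop) : Prop :=
  (exists e, is_Obasis O e) /\ O q1 /\
  (forall x y, O x -> O y -> O (qmul x y)).

Definition tdual (O : A -> Prop) (x : A) : Prop :=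
  forall y, O y -> OF (trd (qmul x y)).

(* P is a (finitely generated) projective left O-module: a direct summand of
   O^n, i.e. there are left O-linear f : P -> O^n and g : O^n -> P
   (g(w) = sum_i w_i p_i) with g o f = id_P. *)
Definition left_projective (O P : A -> Prop) : Prop :=
  exists n (p : 'I_n -> A) (f : A -> 'I_n -> A),
    (forall i, P (p i)) /\
    (forall x i, P x -> O (f x i)) /\
    (forall x y i, P x -> P y -> f (x + y) i = f x i + f y i) /\
    (forall r x i, O r -> P x -> f (qmul r x) i = qmul r (f x i)) /\
    (forall x, P x -> x = \sum_i qmul (f x i) (p i)).

Definition Gorenstein (O : A -> Prop) : Prop := left_projective O (tdual O).

Definition Bass (O : A -> Prop) : Prop :=
  is_order O /\
  forall O', is_order O' -> (forall x, O x -> O' x) -> Gorenstein O'.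

Definition left_ideal (O I : A -> Prop) : Prop :=
  (forall x, I x -> O x) /\ I 0 /\ (forall x y, I x -> I y -> I (x - y)) /\
  (forall r x, O r -> I x -> I (qmul r x)).

Definition max_left_ideal (O I : A -> Prop) : Prop :=
  left_ideal O I /\ (exists x, O x /\ ~ I x) /\
  (forall I', left_ideal O I' -> (forall x, I x -> I' x) ->
      (exists x, O x /\ ~ I' x) -> forall x, I' x -> I x).

Definition jac (O : A -> Prop) (x : A) : Prop :=
  O x /\ forall I, max_left_ideal O I -> I x.

(* e(O) = 0 : O / J(O) is isomorphic to the residue field O_F/m_F, i.e. there
   is a surjective unital ring homomorphism O -> O_F/m_F with kernel J(O)
   (psi picks a representative in O_F). *)
Definition eichler_zero (O : A -> Prop) : Prop :=
  exists psi : A -> F,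
    (forall x, O x -> OF (psi x)) /\
    (forall x y, O x -> O y -> mF (psi (x + y) - (psi x + psi y))) /\
    (forall x y, O x -> O y -> mF (psi (qmul x y) - psi x * psi y)) /\
    mF (psi q1 - 1) /\
    (forall c, OF c -> exists x, O x /\ mF (psi x - c)) /\
    (forall x, O x -> (mF (psi x) <-> jac O x)).

(* n(O) = n : disc(O) = det(trd(e_i e_j)) O_F = d(O)^2 with v(d(O)) = n *)
Definition nrd_disc_val (O : A -> Prop) (n : int) : Prop :=
  exists e, is_Obasis O e /\
    \det (\matrix_(i, j) trd (qmul (e i) (e j))) != 0 /\
    v (\det (\matrix_(i, j) trd (qmul (e i) (e j)))) = 2 * n.

(* an F-embedding phi : K -> A is determined by u = phi(sqrt d), u^2 = d *)
Definition phiK (u : A) (x : A) : Prop := exists s t : F, x = s *: q1 + t *: u.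

Definition integral (x : A) : Prop :=
  exists c : seq F, (forall i, (i < size c)%N -> OF c`_i) /\
    qpow x (size c) + \sum_(i < size c) c`_i *: qpow x i = 0.

(* phi(K) /\ O = phi(O_K) ; phi(O_K) = integral elements of phi(K) *)
Definition optimal_emb (d : F) (O : A -> Prop) (u : A) : Prop :=
  qmul u u = d *: q1 /\
  forall x, phiK u x -> (O x <-> integral x).

Definition normK (d c : F) : Prop :=
  exists s t : F, (s != 0 \/ t != 0) /\ c = s ^+ 2 - d * t ^+ 2.

Definition in_normalizer (O : A -> Prop) (g : A) : Prop :=
  exists h, qmul g h = q1 /\ qmul h g = q1 /\
    forall y, (exists x, O x /\ y = qmul (qmul g x) h) <-> O y.

Definition in_E (O : A -> Prop) (u g : A) : Prop :=
  exists h, qmul g h = q1 /\ qmul h g = q1 /\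
    forall y, phiK u y ->
      ((exists x, O x /\ y = qmul (qmul g x) h) <-> integral y).

End LocalQuat.

(* Main.v *)
Require Import Defs.
From mathcomp Require Import all_boot all_order all_algebra.
From mathcomp Require Import zify ring.
From Stdlib Require Import Classical.
Set Implicit Arguments. Unset Strict Implicit. Unset Printing Implicit Defensive.
Import Order.TTheory GRing.Theory Num.Theory.
Local Open Scope ring_scope.

Section Val.
Variable F : fieldType.
Variable v : F -> int.
Hypothesis Hdv : discrete_valuation v.
Hypothesis Hcomp : vcomplete v.

Definition vge (N : int) (x : F) : bool := (x == 0) || (N <= v x).

Lemma vmul x y : x != 0 -> y != 0 -> v (x * y) = v x + v y.
Proof. by case: Hdv => H _; apply: H. Qed.

Lemma vultra x y : x != 0 -> y != 0 -> x + y != 0 -> Num.min (v x) (v y) <= v (x + y).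
Proof. by case: Hdv => _ [H _]; apply: H. Qed.

Lemma v1 : v 1 = 0.
Proof.
have h : v 1 = v 1 + v 1 by have := vmul (@oner_neq0 F) (@oner_neq0 F); rewrite mulr1.
lia.
Qed.

Lemma vNone : v (-1) = 0.
Proof.
have h : (-1 : F) != 0 by rewrite oppr_eq0 oner_neq0.
have := vmul h h; rewrite mulrNN mulr1 v1; lia.
Qed.

Lemma vN x : v (- x) = v x.
Proof.
case: (eqVneq x 0) => [->|nx]; first by rewrite oppr0.
have h : (-1 : F) != 0 by rewrite oppr_eq0 oner_neq0.
by rewrite -mulN1r vmul // vNone add0r.
Qed.

Lemma vV x : x != 0 -> v (x^-1) = - v x.
Proof.
move=> nx; have := vmul nx (invr_neq0 nx); rewrite mulfV // v1; lia.
Qed.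

Lemma vX x n : x != 0 -> v (x ^+ n) = v x *+ n.
Proof.
move=> nx; elim: n => [|n IH]; first by rewrite expr0 v1 mulr0n.
by rewrite exprS vmul ?expf_neq0 // IH mulrS.
Qed.

Lemma vgeD N x y : vge N x -> vge N y -> vge N (x + y).
Proof.
rewrite /vge; case: (eqVneq x 0) => [->|nx] /=; first by rewrite add0r.
case: (eqVneq y 0) => [->|ny] /=; first by rewrite addr0 => ->; rewrite orbT.
case: (eqVneq (x + y) 0) => //= nxy hx hy.
have hh : Num.min (v x) (v y) <= v (x + y) := vultra nx ny nxy. lia.
Qed.

Lemma vgeM N M x y : vge N x -> vge M y -> vge (N + M) (x * y).
Proof.
rewrite /vge; case: (eqVneq x 0) => [->|nx] /=; first by rewrite mul0r eqxx.
case: (eqVneq y 0) => [->|ny] /=; first by rewrite mulr0 eqxx.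
rewrite mulf_eq0 (negbTE nx) (negbTE ny) /= vmul // => hx hy; lia.
Qed.

Lemma vgeN N x : vge N (- x) = vge N x.
Proof. by rewrite /vge vN oppr_eq0. Qed.

Lemma vgeB N x y : vge N x -> vge N y -> vge N (x - y).
Proof. by move=> hx hy; apply: vgeD => //; rewrite vgeN. Qed.

Lemma vge_le N M x : M <= N -> vge N x -> vge M x.
Proof. rewrite /vge => le /orP [->//|h]; apply/orP; right; lia. Qed.

Lemma vge0x N : vge N 0.
Proof. by rewrite /vge eqxx. Qed.

Lemma vge1 : vge 0 1.
Proof. by rewrite /vge v1 lexx orbT. Qed.

Lemma vge_v x : vge (v x) x.
Proof. by rewrite /vge lexx orbT. Qed.

Lemma vgeNat (n : nat) : vge 0 n%:R.
Proof.
elim: n => [|n IH]; first by rewrite vge0x.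
by rewrite -addn1 natrD; apply: vgeD => //; apply: vge1.
Qed.

Lemma vgeX N x n : vge N x -> vge (N *+ n) (x ^+ n).
Proof.
move=> h; elim: n => [|n IH]; first by rewrite expr0 mulr0n vge1.
by rewrite exprS mulrS; apply: vgeM.
Qed.

Lemma vgeM0 x y : vge 0 x -> vge 0 y -> vge 0 (x * y).
Proof. by move=> hx hy; have := vgeM hx hy; rewrite addr0. Qed.

Lemma vgeX0 x n : vge 0 x -> vge 0 (x ^+ n).
Proof. by move=> hx; have := vgeX n hx; rewrite mul0rn. Qed.

Lemma vgeN1 : vge 0 (-1).
Proof. by rewrite vgeN vge1. Qed.

Lemma vstrict x y : x != 0 -> vge (v x + 1) y -> (x + y != 0) /\ v (x + y) = v x.
Proof.
move=> nx; rewrite /vge; case: (eqVneq y 0) => [->|ny] /=.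
  by rewrite addr0.
move=> hy.
have nxy : x + y != 0.
  apply/negP; rewrite addr_eq0 => /eqP ey; move: hy; rewrite ey vN; lia.
split=> //.
have h1 := vultra nx ny nxy.
have nNy : - y != 0 by rewrite oppr_eq0.
have h2 : Num.min (v (x + y)) (v (- y)) <= v x.
  by have := vultra nxy nNy; rewrite addrK; apply.
have h3 : Num.min (v (x + y)) (v y) <= v x by rewrite -(vN y).
have h4 : Num.min (v x) (v y) <= v (x + y) := h1.
lia.
Qed.

Lemma vgeE N x : x != 0 -> vge N x = (N <= v x).
Proof. by rewrite /vge => /negbTE ->. Qed.

Lemma vge_all x : (forall N, vge N x) -> x = 0.
Proof.
move=> h; apply/eqP; have := h (v x + 1); rewrite /vge => /orP [//|]; lia.
Qed.


Hypothesis Hnd : nondyadic v.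

Lemma two_neq0 : (2 : F) != 0.
Proof. by apply/negP => /eqP h; apply: Hnd; left. Qed.

Lemma v2 : v 2 = 0.
Proof.
have := vgeNat 2; rewrite vgeE ?two_neq0 // => h.
have h2 : ~ (0 < v 2) by move=> hh; apply: Hnd; right.
move/negP: h2; rewrite -leNgt => h3. apply/eqP; rewrite eq_le h3 h.  done.
Qed.

Lemma vunit x : vge 1 (x - 1) -> x != 0 /\ v x = 0.
Proof.
move=> h; have e : x = 1 + (x - 1) by rewrite addrC subrK.
have := @vstrict 1 (x - 1) (oner_neq0 F); rewrite v1 add0r => /(_ h) [].
by rewrite -e => -> ->.
Qed.

Lemma vgeVunit x : x != 0 -> v x = 0 -> vge 0 (x^-1).
Proof. by move=> nx vx; rewrite vgeE ?invr_eq0 // vV // vx. Qed.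

Fixpoint hs (w : F) (k : nat) : F :=
  if k is k'.+1 then (hs w k' + w / hs w k') / 2 else 1.

Section Hensel.
Variable w : F.
Hypothesis hw : vge 1 (w - 1).

Lemma hs_inv k : vge 1 (hs w k - 1) && vge (Posz k + 1) (hs w k ^+ 2 - w)
   /\ vge (Posz k + 1) (hs w k.+1 - hs w k).
Proof.
elim: k => [|k [/andP [h1 h2] _]].
- have e1 : hs w 0 - 1 = 0 by rewrite /= subrr.
  have hh : vge (Posz 0 + 1) (hs w 0 ^+ 2 - w).
    by rewrite /= expr1n -opprB vgeN.
  rewrite e1 vge0x hh; split=> //.
  have [nx vx] : hs w 0 != 0 /\ v (hs w 0) = 0 by rewrite /= oner_neq0 v1.
  have -> : hs w 1 - hs w 0 = - (hs w 0 ^+ 2 - w) * (2 * hs w 0)^-1.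
    rewrite /=; field; rewrite oner_neq0 two_neq0 //.
  have := vgeM hh (vgeVunit (mulf_neq0 two_neq0 nx) _).
  rewrite addr0 vmul ?two_neq0 // v2 vx => /(_ erefl).
  by rewrite mulNr vgeN.
- have [nx vx] := vunit h1.
  have nx2 : 2 * hs w k != 0 by rewrite mulf_neq0 ?two_neq0.
  have hv2 : vge 0 ((2 * hs w k)^-1) by apply: vgeVunit; rewrite // vmul ?two_neq0 // v2 vx.
  have d1 : hs w k.+1 - hs w k = - (hs w k ^+ 2 - w) * (2 * hs w k)^-1.
    rewrite /=; field; rewrite two_neq0 nx //.
  have hd : vge (Posz k + 1) (hs w k.+1 - hs w k).
    by rewrite d1 mulNr vgeN; have := vgeM (h2 : vge _ _) hv2; rewrite addr0.
  have h1' : vge 1 (hs w k.+1 - 1).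
    have -> : hs w k.+1 - 1 = (hs w k - 1) + (hs w k.+1 - hs w k) by ring.
    by apply: vgeD => //; apply: vge_le hd; lia.
  have [nx' vx'] := vunit h1'.
  have hv2' : vge 0 ((2 * hs w k.+1)^-1) by apply: vgeVunit; [rewrite mulf_neq0 ?two_neq0 | rewrite vmul ?two_neq0 // v2 vx'].
  have e2 : hs w k.+1 ^+ 2 - w = (hs w k ^+ 2 - w) ^+ 2 * ((2 * hs w k)^-1) ^+ 2.
    rewrite /=; field; rewrite two_neq0 nx //.
  have hsq : vge (Posz k.+1 + 1) (hs w k.+1 ^+ 2 - w).
    rewrite e2; have := vgeM (vgeX 2 h2) (vgeX 2 hv2); rewrite mul0rn addr0.
    by apply: vge_le; lia.
  rewrite h1' hsq; split=> //.
  have d2 : hs w k.+2 - hs w k.+1 = - (hs w k.+1 ^+ 2 - w) * (2 * hs w k.+1)^-1.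
    have -> : hs w k.+2 = (hs w k.+1 + w / hs w k.+1) / 2 by [].
    move: nx'; set y := hs w k.+1 => ny; field; rewrite two_neq0 ny //.
  by rewrite d2 mulNr vgeN; have := vgeM hsq hv2'; rewrite addr0.
Qed.

Lemma hs_cauchy n m : (n <= m)%N -> vge (Posz n + 1) (hs w m - hs w n).
Proof.
elim: m => [|m IH]; first by rewrite leqn0 => /eqP ->; rewrite subrr vge0x.
rewrite leq_eqVlt => /orP [/eqP ->|]; first by rewrite subrr vge0x.
rewrite ltnS => hnm; have h := IH hnm.
have -> : hs w m.+1 - hs w n = (hs w m.+1 - hs w m) + (hs w m - hs w n) by rewrite addrA subrK.
apply: vgeD => //; have [_ hd] := hs_inv m; apply: vge_le hd; lia.
Qed.

Lemma vge_close N x y : vge N (x - y) -> vclose v N x y.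
Proof.
rewrite /vge /vclose => /orP [/eqP h|h]; [left; apply/eqP; rewrite -subr_eq0 h //|right; done].
Qed.

Lemma close_vge N x y : vclose v N x y -> vge N (x - y).
Proof. by case=> [->|h]; rewrite ?subrr ?vge0x // /vge h orbT. Qed.

Lemma hensel_sq : exists r, r ^+ 2 = w.
Proof.
have hc : forall N : int, exists M, forall m n, (M <= m)%N -> (M <= n)%N ->
        vclose v N (hs w m) (hs w n).
  move=> N; exists `|N|%N => m n hm hn.
  case: (leqP m n) => hmn.
    apply: vge_close; rewrite -vgeN opprB; apply: vge_le (hs_cauchy hmn); lia.
  apply: vge_close; apply: vge_le (hs_cauchy (ltnW hmn)); lia.
have [l hl] := Hcomp hc.
exists l; apply/eqP; rewrite -subr_eq0; apply/eqP; apply: vge_all => N.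
have [M hM] := hl `|N|%:Z.
pose n := maxn M `|N|%N.
have hn := close_vge (hM n (leq_maxl _ _)).
have [h1 h2] := hs_inv n.
case/andP: h1 => h1 h3.
have [nx vx] := vunit h1.
have hx0 : vge 0 (hs w n) by rewrite vgeE // vx.
have e : l ^+ 2 - w = (hs w n ^+ 2 - w) - (hs w n - l) * (2 * hs w n - (hs w n - l)).
  ring.
rewrite e; apply: (@vge_le (`|N|%:Z)); first lia.
apply: vgeB.
  apply: vge_le h3; rewrite /n; have := leq_maxr M `|N|%N; lia.
have := vgeM hn (vgeB (vgeM (vgeNat 2) hx0) (@vge_le _ 0 _ (_ : 0 <= `|N|%:Z) hn)).
by rewrite !addr0; apply.
Qed.
End Hensel.


Section VR.
Variable d : F.
Hypothesis nsq : forall t : F, t ^+ 2 != d.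

Lemma normK_neq0 (s r : F) : (s != 0) || (r != 0) -> s ^+ 2 - d * r ^+ 2 != 0.
Proof.
case: (eqVneq r 0) => [->|nr] /=.
  by rewrite orbF expr0n /= mulr0 subr0 => h; rewrite expf_neq0.
move=> _; apply/negP; rewrite subr_eq0 => /eqP e.
have := nsq (s / r); rewrite expr_div_n e mulfK ?expf_neq0 // eqxx //.
Qed.

Lemma vr_prop (s r : F) : (s != 0) || (r != 0) ->
  (vge 0 s && vge 0 (s ^+ 2 - d * r ^+ 2)) ||
  (vge 0 (s / (s ^+ 2 - d * r ^+ 2)) && vge 0 ((s ^+ 2 - d * r ^+ 2)^-1)).
Proof.
move=> hsr; set N := s ^+ 2 - d * r ^+ 2; have nN : N != 0 by apply: normK_neq0.
case: (eqVneq s 0) => [s0|ns].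
  have z0 : vge 0 (0:F) := vge0x 0. rewrite s0 mul0r z0 /= vgeE // vgeE ?invr_eq0 // vV //.
  apply/orP; case: (lerP 0 (v N)) => h; [left|right]; lia.
rewrite !vgeE ?mulf_neq0 ?invr_eq0 // vmul ?invr_eq0 // vV //.
case: (boolP (v s + v s < v N)) => hb; last first.
  have [h1|h1] : ((0 <= v s) /\ (0 <= v N)) \/ ((0 <= v s + - v N) /\ (0 <= - v N)).
    move: hb; rewrite -leNgt => hb; lia.
  - by case: h1 => -> ->.
  - by case: h1 => -> ->; rewrite orbT.
exfalso.
set w := d * r ^+ 2 / s ^+ 2.
have ew : w - 1 = - (N / s ^+ 2) by rewrite /w /N; field.
have hw : vge 1 (w - 1).
  rewrite ew vgeN vgeE ?mulf_neq0 ?invr_eq0 ?expf_neq0 // vmul ?invr_eq0 ?expf_neq0 //.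
  rewrite vV ?expf_neq0 // vX //; lia.
have [rho hr] := hensel_sq hw.
case: (eqVneq r 0) => [r0|nr].
  move: hw; rewrite /w r0 expr0n /= mulr0 mul0r sub0r vgeN vgeE ?oner_neq0 // v1 //.
have := nsq (rho * s / r).
rewrite !expr_div_n exprMn hr /w divfK ?expf_neq0 // mulfK ?expf_neq0 // eqxx //.
Qed.
End VR.

End Val.

Section Quat.
Variable F : fieldType.
Variables a b : F.
Local Notation A := 'rV[F]_4.
Local Notation qmul := (qmul a b).
Local Notation nrd := (nrd a b).
Local Notation q1 := (q1 F).

Lemma qc_mkq0 (t x y z : F) : qc (mkq t x y z) 0 = t.
Proof. by rewrite /qc /mkq mxE inordK. Qed.
Lemma qc_mkq1 (t x y z : F) : qc (mkq t x y z) 1 = x.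
Proof. by rewrite /qc /mkq mxE inordK. Qed.
Lemma qc_mkq2 (t x y z : F) : qc (mkq t x y z) 2 = y.
Proof. by rewrite /qc /mkq mxE inordK. Qed.
Lemma qc_mkq3 (t x y z : F) : qc (mkq t x y z) 3 = z.
Proof. by rewrite /qc /mkq mxE inordK. Qed.

Lemma qext (p q : A) : qc p 0 = qc q 0 -> qc p 1 = qc q 1 -> qc p 2 = qc q 2 ->
  qc p 3 = qc q 3 -> p = q.
Proof.
rewrite /qc => h0 h1 h2 h3; apply/rowP => i.
case: i => [[|[|[|[|i]]]] hi] //.
- by move: h0; rewrite (_ : inord 0 = Ordinal hi) //; apply: val_inj; rewrite /= inordK.
- by move: h1; rewrite (_ : inord 1 = Ordinal hi) //; apply: val_inj; rewrite /= inordK.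
- by move: h2; rewrite (_ : inord 2 = Ordinal hi) //; apply: val_inj; rewrite /= inordK.
- by move: h3; rewrite (_ : inord 3 = Ordinal hi) //; apply: val_inj; rewrite /= inordK.
Qed.

Lemma qcD (p q : A) k : qc (p + q) k = qc p k + qc q k.
Proof. by rewrite /qc mxE. Qed.
Lemma qcN (p : A) k : qc (- p) k = - qc p k.
Proof. by rewrite /qc mxE. Qed.
Lemma qcB (p q : A) k : qc (p - q) k = qc p k - qc q k.
Proof. by rewrite qcD qcN. Qed.
Lemma qcZ (c : F) (p : A) k : qc (c *: p) k = c * qc p k.
Proof. by rewrite /qc mxE. Qed.
Lemma qc0 k : qc (0 : A) k = 0.
Proof. by rewrite /qc mxE. Qed.
Lemma qc_sum I (r : seq I) (P : pred I) (f : I -> A) k :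
  qc (\sum_(i <- r | P i) f i) k = \sum_(i <- r | P i) qc (f i) k.
Proof. by rewrite /qc summxE. Qed.

Definition qcE := (qc_mkq0, qc_mkq1, qc_mkq2, qc_mkq3, qcD, qcN, qcZ, qc0).

Ltac qsolve := apply: qext; rewrite /Defs.nrd /Defs.qmul /Defs.q1 /qconj ?qcE; ring.

Lemma qmulA (p q r : A) : qmul p (qmul q r) = qmul (qmul p q) r.
Proof. qsolve. Qed.
Lemma qmulDl (p q r : A) : qmul (p + q) r = qmul p r + qmul q r.
Proof. qsolve. Qed.
Lemma qmulDr (p q r : A) : qmul r (p + q) = qmul r p + qmul r q.
Proof. qsolve. Qed.
Lemma qmulBl (p q r : A) : qmul (p - q) r = qmul p r - qmul q r.
Proof. qsolve. Qed.
Lemma qmulBr (p q r : A) : qmul r (p - q) = qmul r p - qmul r q.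
Proof. qsolve. Qed.
Lemma qmulZl (c : F) (p q : A) : qmul (c *: p) q = c *: qmul p q.
Proof. qsolve. Qed.
Lemma qmulZr (c : F) (p q : A) : qmul p (c *: q) = c *: qmul p q.
Proof. qsolve. Qed.
Lemma qmul1l (p : A) : qmul q1 p = p.
Proof. qsolve. Qed.
Lemma qmul1r (p : A) : qmul p q1 = p.
Proof. qsolve. Qed.
Lemma qmulNl (p q : A) : qmul (- p) q = - qmul p q.
Proof. qsolve. Qed.
Lemma qmulNr (p q : A) : qmul p (- q) = - qmul p q.
Proof. qsolve. Qed.
Lemma qmul0l (p : A) : qmul 0 p = 0.
Proof. qsolve. Qed.
Lemma qmul0r (p : A) : qmul p 0 = 0.
Proof. qsolve. Qed.
Lemma nrdM (p q : A) : nrd (qmul p q) = nrd p * nrd q.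
Proof. rewrite /nrd /qmul !qcE; ring. Qed.
Lemma trdC (p q : A) : trd (qmul p q) = trd (qmul q p).
Proof. rewrite /trd /qmul !qcE; ring. Qed.
Lemma trdD (p q : A) : trd (p + q) = trd p + trd q.
Proof. rewrite /trd !qcE; ring. Qed.
Lemma trdZ (c : F) (p : A) : trd (c *: p) = c * trd p.
Proof. rewrite /trd !qcE; ring. Qed.
Lemma trd0 : trd (0 : A) = 0.
Proof. by rewrite /trd qc0 mulr0. Qed.
Lemma qmul_conj (p : A) : qmul p (qconj p) = nrd p *: q1.
Proof. qsolve. Qed.
Lemma qmul_conjl (p : A) : qmul (qconj p) p = nrd p *: q1.
Proof. qsolve. Qed.
Lemma q1_neq0 : q1 != 0 :> A.
Proof. apply/negP => /eqP h; have := congr1 (fun p : A => qc p 0) h; rewrite /Defs.q1 !qcE => /eqP; rewrite oner_eq0. done. Qed.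


Definition kk (u : A) (s r : F) : A := s *: q1 + r *: u.



End Quat.

Section Lat.
Variable F : fieldType.
Variable v : F -> int.
Hypothesis Hdv : discrete_valuation v.
Variables a b : F.
Local Notation A := 'rV[F]_4.
Local Notation qmul := (qmul a b).
Local Notation nrd := (nrd a b).
Local Notation q1 := (q1 F).
Local Notation vge := (vge v).
Local Notation vmul := (vmul Hdv).
Local Notation vultra := (vultra Hdv).
Local Notation v1 := (v1 Hdv).
Local Notation vNone := (vNone Hdv).
Local Notation vN := (vN Hdv).
Local Notation vV := (vV Hdv).
Local Notation vX := (vX Hdv).
Local Notation vgeD := (vgeD Hdv).
Local Notation vgeM := (vgeM Hdv).
Local Notation vgeN := (vgeN Hdv).
Local Notation vgeB := (vgeB Hdv).
Local Notation vge1 := (vge1 Hdv).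
Local Notation vgeNat := (vgeNat Hdv).
Local Notation vgeX := (vgeX Hdv).
Local Notation vgeM0 := (vgeM0 Hdv).
Local Notation vgeX0 := (vgeX0 Hdv).
Local Notation vgeN1 := (vgeN1 Hdv).
Local Notation vstrict := (vstrict Hdv).
Local Notation vunit := (vunit Hdv).
Local Notation vgeVunit := (vgeVunit Hdv).

Lemma OF_vge x : OF v x <-> vge 0 x.
Proof.
rewrite /OF /vge; split; first by case=> [->|h]; rewrite ?eqxx // h orbT.
by case/orP => [/eqP ->|h]; [left|right].
Qed.

Definition Gram (f : 'I_4 -> A) : 'M[F]_4 := \matrix_(i, j) trd (qmul (f i) (f j)).

Lemma qmul_suml I (r : seq I) (P : pred I) (g : I -> A) (q : A) :
  qmul (\sum_(i <- r | P i) g i) q = \sum_(i <- r | P i) qmul (g i) q.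
Proof. exact: (big_morph (fun p => qmul p q) (fun p p' => qmulDl a b p p' q) (qmul0l a b q)). Qed.

Lemma qmul_sumr I (r : seq I) (P : pred I) (g : I -> A) (q : A) :
  qmul q (\sum_(i <- r | P i) g i) = \sum_(i <- r | P i) qmul q (g i).
Proof. exact: (big_morph (fun p => qmul q p) (fun p p' => qmulDr a b p p' q) (qmul0r a b q)). Qed.

Lemma trd_sum I (r : seq I) (P : pred I) (g : I -> A) :
  trd (\sum_(i <- r | P i) g i) = \sum_(i <- r | P i) trd (g i).
Proof. exact: (big_morph (@trd F) (@trdD F) (@trd0 F)). Qed.

Lemma gram_lin (f e : 'I_4 -> A) (P : 'M[F]_4) :
  (forall i, f i = \sum_j P i j *: e j) -> Gram f = P *m Gram e *m P^T.
Proof.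
move=> hf; apply/matrixP => i k; rewrite !mxE hf hf qmul_suml trd_sum.
under eq_bigr => j _ do rewrite qmul_sumr trd_sum.
rewrite exchange_big /=; apply: eq_bigr => l _.
rewrite !mxE mulr_suml; apply: eq_bigr => j _.
by rewrite !mxE qmulZl qmulZr !trdZ; ring.
Qed.

Lemma det_int n (P : 'M[F]_n) : (forall i j, vge 0 (P i j)) -> vge 0 (\det P).
Proof.
move=> hP; rewrite /determinant.
apply: (big_ind (fun x => vge 0 x)); first exact: vge0x.
  by move=> x y; apply: vgeD.
move=> s _; apply: vgeM0 => //; first by apply: vgeX0 => //; apply: vgeN1.
apply: (big_ind (fun x => vge 0 x)); first exact: vge1.
  by move=> x y hx hy; apply: vgeM0.
by move=> j _; apply: hP.
Qed.


Section Basis.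
Variable X : A -> Prop.
Variable e : 'I_4 -> A.
Hypothesis hb : is_Obasis v X e.

Lemma Xrep x : X x <-> exists c : 'I_4 -> F, (forall i, vge 0 (c i)) /\ x = \sum_i c i *: e i.
Proof.
case: hb => _ h; rewrite h; split; case=> c [hc ->]; exists c; split=> // i; apply/OF_vge; exact: hc.
Qed.

Lemma sum_delta (g : 'I_4 -> A) i : \sum_j (i == j)%:R *: g j = g i.
Proof.
rewrite (bigD1 i) //= eqxx scale1r big1 ?addr0 // => j /negbTE.
by rewrite eq_sym => ->; rewrite scale0r.
Qed.

Lemma Xe i : X (e i).
Proof.
apply/Xrep; exists (fun j => (i == j)%:R); split; last by rewrite sum_delta.
by move=> j; case: (i == j); [apply: vge1 | apply: vge0x].
Qed.

Lemma XD x y : X x -> X y -> X (x + y).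
Proof.
move=> /Xrep [c [hc ->]] /Xrep [c' [hc' ->]]; apply/Xrep.
exists (fun i => c i + c' i); split; first by move=> i; apply: vgeD.
by rewrite -big_split /=; apply: eq_bigr => i _; rewrite scalerDl.
Qed.

Lemma XZ k x : vge 0 k -> X x -> X (k *: x).
Proof.
move=> hk /Xrep [c [hc ->]]; apply/Xrep.
exists (fun i => k * c i); split; first by move=> i; apply: vgeM0.
by rewrite scaler_sumr; apply: eq_bigr => i _; rewrite scalerA.
Qed.

Lemma XN x : X x -> X (- x).
Proof. by move=> hx; rewrite -scaleN1r; apply: XZ => //; apply: vgeN1. Qed.

Lemma XB x y : X x -> X y -> X (x - y).
Proof. by move=> hx hy; apply: XD => //; apply: XN. Qed.

Lemma X0 : X 0.
Proof. by rewrite -(scale0r (e ord0)); apply: XZ; [apply: vge0x | apply: Xe]. Qed.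

Lemma Xbound : exists M, forall x, X x -> forall k, (k < 4)%N -> vge M (qc x k).
Proof.
pose S := (\sum_i \sum_(k < 4) `|v (qc (e i) k)|)%N.
exists (- (S%:Z)) => x /Xrep [c [hc ->]] k hk.
rewrite qc_sum.
apply: (big_ind (fun y => vge (- S%:Z) y)); first exact: vge0x.
  by move=> y z; apply: vgeD.
move=> i _; rewrite qcZ.
have hle : (`|v (qc (e i) k)| <= S)%N.
  rewrite /S (bigD1 i) //= (bigD1 (Ordinal hk)) //= -addnA; exact: leq_addr.
have := vgeM (hc i) (vge_v v (qc (e i) k)); rewrite add0r; apply: vge_le.
lia.
Qed.

Lemma nrd_bound : exists C, forall x, X x -> vge C (nrd x).
Proof.
have [M hM] := Xbound.
exists (M + M - `|v a|%:Z - `|v b|%:Z) => x hx.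
have h0 := hM x hx 0%N erefl; have h1 := hM x hx 1%N erefl;
have h2 := hM x hx 2%N erefl; have h3 := hM x hx 3%N erefl.
rewrite /Defs.nrd.
have va := vge_v v a; have vb := vge_v v b.
apply: vgeD; [apply: vgeB; [apply: vgeB|]|].
- apply: vge_le (vgeX 2 h0); lia.
- rewrite expr2 mulrA; apply: vge_le (vgeM (vgeM va h1) h1); lia.
- rewrite expr2 mulrA; apply: vge_le (vgeM (vgeM vb h2) h2); lia.
- rewrite expr2 mulrA; apply: vge_le (vgeM (vgeM (vgeM va vb) h3) h3); lia.
Qed.

Lemma Xcoord (f : 'I_4 -> A) : (forall i, X (f i)) ->
  exists P : 'M[F]_4, (forall i j, vge 0 (P i j)) /\ forall i, f i = \sum_j P i j *: e j.
Proof.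
move=> hf.
have : forall i, exists c : 'I_4 -> F, (forall j, vge 0 (c j)) /\ f i = \sum_j c j *: e j.
  by move=> i; apply/Xrep.
case/fin_all_exists => c hc.
exists (\matrix_(i, j) c i j); split.
  by move=> i j; rewrite mxE; case: (hc i) => h _; apply: h.
by move=> i; case: (hc i) => _ ->; apply: eq_bigr => j _; rewrite mxE.
Qed.

Lemma gram_sub (f : 'I_4 -> A) : (forall i, X (f i)) ->
  vge (v (\det (Gram e))) (\det (Gram f)).
Proof.
case/Xcoord => P [hP hf].
rewrite (gram_lin hf) !det_mulmx det_tr mulrC mulrA.
have := vgeM (vgeM0 (det_int hP) (det_int hP)) (vge_v v (\det (Gram e))).
by rewrite add0r.
Qed.

End Basis.

Lemma index_eq (X Y : A -> Prop) (e e' : 'I_4 -> A) :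
  is_Obasis v X e -> is_Obasis v Y e' -> (forall x, X x -> Y x) ->
  \det (Gram e) != 0 -> \det (Gram e') != 0 ->
  v (\det (Gram e)) = v (\det (Gram e')) -> forall y, Y y -> X y.
Proof.
move=> hX hY hXY n1 n2 ev.
have [P [hP hf]] := Xcoord hY (fun i => hXY _ (Xe hX i)).
have eG := gram_lin hf.
have nP : \det P != 0.
  by apply/negP => /eqP h; move: n1; rewrite eG !det_mulmx h !mul0r eqxx.
have vP : v (\det P) = 0.
  have h1 : v (\det (Gram e)) = v (\det P) + v (\det (Gram e')) + v (\det P).
    by rewrite eG !det_mulmx det_tr vmul ?mulf_neq0 // vmul.
  move: ev; rewrite h1 => h2; lia.
pose Q := (\det P)^-1 *: \adj P.
have hQP : Q *m P = 1%:M by rewrite /Q -scalemxAl mul_adj_mx scale_scalar_mx mulVf.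
have hQ : forall i j, vge 0 (Q i j).
  move=> i j; rewrite /Q mxE; apply: vgeM0; first by rewrite vgeE ?invr_eq0 // vV // vP.
  rewrite mxE /cofactor; apply: vgeM0; first by apply: vgeX0; apply: vgeN1.
  apply: det_int => k l; rewrite !mxE; exact: hP.
have he' : forall j, e' j = \sum_i Q j i *: e i.
  move=> j.
  under eq_bigr => i _ do rewrite hf scaler_sumr.
  rewrite exchange_big /=.
  have -> : \sum_k \sum_i Q j i *: (P i k *: e' k) = \sum_k (Q *m P) j k *: e' k.
    apply: eq_bigr => k _; rewrite mxE scaler_suml; apply: eq_bigr => i _; by rewrite scalerA.
  rewrite hQP; under eq_bigr => k _ do rewrite mxE.
  by rewrite sum_delta.
move=> y /(Xrep hY) [c [hc ->]]; apply/(Xrep hX).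
exists (fun i => \sum_j c j * Q j i); split.
  move=> i; apply: (big_ind (fun x => vge 0 x)); [exact: vge0x | by move=> ? ?; apply: vgeD|].
  by move=> j _; apply: vgeM0.
under eq_bigr => j _ do rewrite he' scaler_sumr.
rewrite exchange_big /=; apply: eq_bigr => i _; rewrite scaler_suml; apply: eq_bigr => j _.
by rewrite scalerA.
Qed.

End Lat.

Section Ord.
Variable F : fieldType.
Variable v : F -> int.
Hypothesis Hdv : discrete_valuation v.
Hypothesis Hnd : nondyadic v.
Hypothesis Hcomp : vcomplete v.
Variables a b : F.
Hypothesis a0 : a != 0.
Hypothesis b0 : b != 0.
Variable u : 'rV[F]_4.
Variable d : F.
Hypothesis hu : qmul a b u u = d *: q1 F.
Hypothesis nsq : forall t : F, t ^+ 2 != d.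
Local Notation A := 'rV[F]_4.
Local Notation qmul := (qmul a b).
Local Notation nrd := (nrd a b).
Local Notation q1 := (q1 F).
Local Notation vge := (vge v).
Local Notation qmulA := (@qmulA _ a b).
Local Notation qmulDl := (@qmulDl _ a b).
Local Notation qmulDr := (@qmulDr _ a b).
Local Notation qmulBl := (@qmulBl _ a b).
Local Notation qmulBr := (@qmulBr _ a b).
Local Notation qmulZl := (@qmulZl _ a b).
Local Notation qmulZr := (@qmulZr _ a b).
Local Notation qmul1l := (@qmul1l _ a b).
Local Notation qmul1r := (@qmul1r _ a b).
Local Notation qmulNl := (@qmulNl _ a b).
Local Notation qmulNr := (@qmulNr _ a b).
Local Notation qmul0l := (@qmul0l _ a b).
Local Notation qmul0r := (@qmul0r _ a b).
Local Notation nrdM := (@nrdM _ a b).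
Local Notation trdC := (@trdC _ a b).
Local Notation qmul_conj := (@qmul_conj _ a b).
Local Notation qmul_conjl := (@qmul_conjl _ a b).

Local Notation qpow := (qpow a b).
Local Notation vmul := (vmul Hdv).
Local Notation vultra := (vultra Hdv).
Local Notation v1 := (v1 Hdv).
Local Notation vN := (vN Hdv).
Local Notation vV := (vV Hdv).
Local Notation vX := (vX Hdv).
Local Notation vgeD := (vgeD Hdv).
Local Notation vgeM := (vgeM Hdv).
Local Notation vgeN := (vgeN Hdv).
Local Notation vgeB := (vgeB Hdv).
Local Notation vge1 := (vge1 Hdv).
Local Notation vgeNat := (vgeNat Hdv).
Local Notation vgeX := (vgeX Hdv).
Local Notation vgeM0 := (vgeM0 Hdv).
Local Notation vgeX0 := (vgeX0 Hdv).
Local Notation vgeN1 := (vgeN1 Hdv).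
Local Notation vstrict := (vstrict Hdv).

Lemma two0 : (2 : F) != 0.
Proof. exact: two_neq0 Hnd. Qed.
Lemma v2' : v 2 = 0.
Proof. exact: v2 Hdv Hnd. Qed.









Lemma d_neq0 : d != 0.
Proof. by apply/negP => /eqP e; have := nsq 0; rewrite e expr0n eqxx. Qed.

Lemma hu_c k : qc (qmul u u) k = qc (d *: q1) k.
Proof. by rewrite hu. Qed.

Lemma u0 : qc u 0 = 0.
Proof.
have h0 := hu_c 0; have h1 := hu_c 1; have h2 := hu_c 2; have h3 := hu_c 3.
rewrite /Defs.qmul /Defs.q1 !qcE in h0 h1 h2 h3.
apply/eqP/negPn/negP => nu.
have e1 : qc u 1 = 0.
  apply/eqP; move: h1; rewrite !mulr0 (_ : _ + _ = 2 * qc u 0 * qc u 1); last by ring.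
  by move/eqP; rewrite !mulf_eq0 (negbTE two0) (negbTE nu).
have e2 : qc u 2 = 0.
  apply/eqP; move: h2; rewrite !mulr0 (_ : _ + _ = 2 * qc u 0 * qc u 2); last by ring.
  by move/eqP; rewrite !mulf_eq0 (negbTE two0) (negbTE nu).
have e3 : qc u 3 = 0.
  apply/eqP; move: h3; rewrite !mulr0 (_ : _ + _ = 2 * qc u 0 * qc u 3); last by ring.
  by move/eqP; rewrite !mulf_eq0 (negbTE two0) (negbTE nu).
move: h0; rewrite e1 e2 e3 mulr1 => h0.
have := nsq (qc u 0); rewrite -h0; apply/negP; rewrite negbK; apply/eqP; ring.
Qed.

Definition Du := a * qc u 1 ^+ 2 + b * qc u 2 ^+ 2 - a * b * qc u 3 ^+ 2.

Lemma dE : d = Du.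
Proof.
have h0 := hu_c 0; rewrite /Defs.qmul /Defs.q1 !qcE u0 mulr1 in h0.
rewrite -h0 /Du; ring.
Qed.

Lemma Du_neq0 : Du != 0.
Proof. by rewrite -dE d_neq0. Qed.

Lemma uE : u = mkq 0 (qc u 1) (qc u 2) (qc u 3).
Proof. by apply: qext; rewrite !qcE // u0. Qed.


Lemma u_neq0 : u != 0.
Proof.
apply/negP => /eqP e; have := d_neq0; rewrite dE /Du.
have := congr1 (fun p : A => qc p 1) e; have := congr1 (fun p : A => qc p 2) e;
have := congr1 (fun p : A => qc p 3) e; rewrite !qc0 => -> -> ->.
by rewrite expr0n /= !mulr0 addr0 subr0 eqxx.
Qed.

Lemma centr x : qmul x u = qmul u x -> exists s r, x = kk u s r.
Proof.
move=> h.
have h1 := congr1 (fun p : A => qc p 1) h; have h2 := congr1 (fun p : A => qc p 2) h;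
have h3 := congr1 (fun p : A => qc p 3) h.
rewrite /Defs.qmul !qcE u0 in h1 h2 h3.
have c1 : qc x 2 * qc u 3 = qc x 3 * qc u 2.
  apply/eqP; move/eqP: h1; rewrite -subr_eq0 => /eqP h1.
  rewrite -subr_eq0; apply/eqP.
  have : 2 * b * (qc x 2 * qc u 3 - qc x 3 * qc u 2) = 0 by rewrite -oppr0 -h1; ring.
  by move/eqP; rewrite !mulf_eq0 (negbTE two0) (negbTE b0) /= => /eqP.
have c2 : qc x 1 * qc u 3 = qc x 3 * qc u 1.
  apply/eqP; move/eqP: h2; rewrite -subr_eq0 => /eqP h2.
  rewrite -subr_eq0; apply/eqP.
  have : 2 * a * (qc x 1 * qc u 3 - qc x 3 * qc u 1) = 0 by rewrite -h2; ring.
  by move/eqP; rewrite !mulf_eq0 (negbTE two0) (negbTE a0) /= => /eqP.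
have c3 : qc x 1 * qc u 2 = qc x 2 * qc u 1.
  apply/eqP; move/eqP: h3; rewrite -subr_eq0 => /eqP h3.
  rewrite -subr_eq0; apply/eqP.
  have : 2 * (qc x 1 * qc u 2 - qc x 2 * qc u 1) = 0 by rewrite -h3; ring.
  by move/eqP; rewrite !mulf_eq0 (negbTE two0) /= => /eqP.
exists (qc x 0).
case: (eqVneq (qc u 1) 0) => n1.
  case: (eqVneq (qc u 2) 0) => n2.
    case: (eqVneq (qc u 3) 0) => n3.
      by exfalso; move: u_neq0; rewrite uE n1 n2 n3; move/negP; apply; apply/eqP; apply: qext; rewrite !qcE.
    exists (qc x 3 / qc u 3); apply: qext; rewrite /kk /Defs.q1 !qcE ?u0 ?n1 ?n2.
    - ring.
    - move: c2; rewrite n1 mulr0 => /eqP; rewrite mulf_eq0 (negbTE n3) orbF => /eqP ->; ring.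
    - move: c1; rewrite n2 mulr0 => /eqP; rewrite mulf_eq0 (negbTE n3) orbF => /eqP ->; ring.
    - by field; rewrite ?two0 //.
  exists (qc x 2 / qc u 2); apply: qext; rewrite /kk /Defs.q1 !qcE ?u0 ?n1.
  - ring.
  - move: c3; rewrite n1 mulr0 => /eqP; rewrite mulf_eq0 (negbTE n2) orbF => /eqP ->; ring.
  - by field; rewrite ?two0 //.
  - apply: (mulIf n2); rewrite -c1; field; rewrite ?two0 //.
exists (qc x 1 / qc u 1); apply: qext; rewrite /kk /Defs.q1 !qcE ?u0.
- ring.
- by field; rewrite ?two0 //.
- apply: (mulIf n1); rewrite -c3; field; rewrite ?two0 //.
- apply: (mulIf n1); rewrite -c2; field; rewrite ?two0 //.
Qed.

Lemma anticomm0 x : qmul x u = - qmul u x -> qc x 0 = 0.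
Proof.
move=> h.
have h1 := congr1 (fun p : A => qc p 1) h; have h2 := congr1 (fun p : A => qc p 2) h;
have h3 := congr1 (fun p : A => qc p 3) h.
rewrite /Defs.qmul !qcE u0 in h1 h2 h3.
apply/eqP/negPn/negP => nx; have := u_neq0; apply/negP; rewrite negbK; apply/eqP.
move/eqP: h1; rewrite -subr_eq0 => /eqP h1.
move/eqP: h2; rewrite -subr_eq0 => /eqP h2.
move/eqP: h3; rewrite -subr_eq0 => /eqP h3.
apply: qext; rewrite qc0 ?u0 //.
- have : 2 * qc x 0 * qc u 1 = 0 by rewrite -h1; ring.
  by move/eqP; rewrite !mulf_eq0 (negbTE two0) (negbTE nx) => /eqP.
- have : 2 * qc x 0 * qc u 2 = 0 by rewrite -h2; ring.
  by move/eqP; rewrite !mulf_eq0 (negbTE two0) (negbTE nx) => /eqP.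
- have : 2 * qc x 0 * qc u 3 = 0 by rewrite -h3; ring.
  by move/eqP; rewrite !mulf_eq0 (negbTE two0) (negbTE nx) => /eqP.
Qed.


Lemma Du_neq0' : a * qc u 1 ^+ 2 + b * qc u 2 ^+ 2 - a * b * qc u 3 ^+ 2 != 0.
Proof. exact: Du_neq0. Qed.

Ltac usolve := rewrite ?dE /Du; try rewrite [u]uE; apply: qext;
  rewrite /Defs.nrd /Defs.qmul /Defs.q1 /qconj /kk ?qcE; field; rewrite ?Du_neq0' ?two0 //.

Lemma pure_sq q : qc q 0 = 0 -> qmul q q = (- nrd q) *: q1.
Proof. move=> h; apply: qext; rewrite /Defs.nrd /Defs.qmul /Defs.q1 ?qcE h; ring. Qed.

Lemma nrd_kk s r : nrd (kk u s r) = s ^+ 2 - d * r ^+ 2.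
Proof. rewrite dE /Du [u]uE /Defs.nrd /kk /Defs.q1 !qcE; ring. Qed.

Lemma kk_mul s r s' r' :
  qmul (kk u s r) (kk u s' r') = kk u (s * s' + d * r * r') (s * r' + r * s').
Proof. usolve. Qed.

Lemma kk_comm s r : qmul (kk u s r) u = qmul u (kk u s r).
Proof. usolve. Qed.

Lemma kk_inv s r : s ^+ 2 - d * r ^+ 2 != 0 ->
  qmul (kk u (s / (s ^+ 2 - d * r ^+ 2)) (- r / (s ^+ 2 - d * r ^+ 2))) (kk u s r) = q1.
Proof.
move=> nN; rewrite kk_mul /kk.
set N := s ^+ 2 - d * r ^+ 2.
rewrite (_ : _ * _ + _ * _ * _ = 1); last by rewrite /N; field.
rewrite (_ : _ * _ + _ * _ = 0); last by rewrite /N; field.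
by rewrite scale1r scale0r addr0.
Qed.

Lemma kk_inv' s r : s ^+ 2 - d * r ^+ 2 != 0 ->
  qmul (kk u s r) (kk u (s / (s ^+ 2 - d * r ^+ 2)) (- r / (s ^+ 2 - d * r ^+ 2))) = q1.
Proof.
move=> nN; rewrite kk_mul /kk.
set N := s ^+ 2 - d * r ^+ 2.
rewrite (_ : _ * _ + _ * _ * _ = 1); last by rewrite /N; field.
rewrite (_ : _ * _ + _ * _ = 0); last by rewrite /N; field.
by rewrite scale1r scale0r addr0.
Qed.

Definition Pp (x : A) : A := (2^-1) *: (x + d^-1 *: qmul u (qmul x u)).
Definition Qm (x : A) : A := x - Pp x.

Lemma half_lemma (X Y : A) : X - 2^-1 *: (X + Y) = 2^-1 *: (X - Y).
Proof. apply: qext; rewrite !qcE; field; rewrite ?two0 //. Qed.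

Lemma u_Pp x : qmul u (Pp x) = 2^-1 *: (qmul u x + qmul x u).
Proof.
rewrite /Pp qmulZr qmulDr qmulZr.
have -> : qmul u (qmul u (qmul x u)) = d *: qmul x u by rewrite qmulA hu qmulZl qmul1l.
by rewrite scalerA mulVf ?d_neq0 // scale1r.
Qed.

Lemma Pp_u x : qmul (Pp x) u = 2^-1 *: (qmul u x + qmul x u).
Proof.
rewrite /Pp qmulZl qmulDl qmulZl.
have -> : qmul (qmul u (qmul x u)) u = d *: qmul u x.
  by rewrite -qmulA -qmulA hu qmulZr qmul1r qmulZr.
by rewrite scalerA mulVf ?d_neq0 // scale1r addrC.
Qed.

Lemma Pp_comm x : qmul (Pp x) u = qmul u (Pp x).
Proof. by rewrite u_Pp Pp_u. Qed.

Lemma Qm_anti x : qmul (Qm x) u = - qmul u (Qm x).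
Proof.
rewrite /Qm qmulBl qmulBr Pp_u u_Pp.
move: (qmul x u) (qmul u x) => X Y; apply: qext; rewrite !qcE; field; rewrite ?two0 //.
Qed.

Lemma lam_id t x : qmul (t *: u) x + qmul x (t *: u) = (2 * t) *: qmul u (Pp x).
Proof.
rewrite u_Pp qmulZl qmulZr.
move: (qmul x u) (qmul u x) => X Y; apply: qext; rewrite !qcE; field; rewrite ?two0 //.
Qed.

Definition anti (z : A) := qmul z u = - qmul u z.
Definition comm (z : A) := qmul z u = qmul u z.

Lemma comm_anti p q : comm p -> anti q -> anti (qmul p q).
Proof. by rewrite /comm /anti => hp hq; rewrite -qmulA hq qmulNr qmulA hp -qmulA. Qed.
Lemma anti_comm p q : anti p -> comm q -> anti (qmul p q).
Proof. by rewrite /comm /anti => hp hq; rewrite -qmulA hq qmulA hp qmulNl -qmulA. Qed.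
Lemma anti_anti p q : anti p -> anti q -> comm (qmul p q).
Proof. by rewrite /comm /anti => hp hq; rewrite -qmulA hq qmulNr qmulA hp qmulNl opprK -qmulA. Qed.
Lemma trd_anti z : anti z -> trd z = 0.
Proof. by move=> h; rewrite /trd (anticomm0 h) mulr0. Qed.
Lemma kk_commP s r : comm (kk u s r).
Proof. exact: kk_comm. Qed.
Lemma trd_kk s r : trd (kk u s r) = 2 * s.
Proof. by rewrite /trd /kk /Defs.q1 !qcE u0; congr (_ * _); ring. Qed.
Lemma u_kk : u = kk u 0 1.
Proof. by rewrite /kk scale0r add0r scale1r. Qed.
Lemma q1_kk : q1 = kk u 1 0.
Proof. by rewrite /kk scale0r addr0 scale1r. Qed.
Lemma kk_inj s r s' r' : kk u s r = kk u s' r' -> s = s' /\ r = r'.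
Proof.
move=> h; have h0 := congr1 (fun p : A => qc p 0) h.
rewrite /kk /Defs.q1 !qcE u0 !mulr0 !addr0 !mulr1 in h0; split=> //.
move: h; rewrite h0 /kk => /addrI /eqP; rewrite -subr_eq0 -scalerBl scaler_eq0 (negbTE u_neq0) orbF subr_eq0 => /eqP //.
Qed.
Lemma kkZ c s r : c *: kk u s r = kk u (c * s) (c * r).
Proof. by rewrite /kk scalerDr !scalerA. Qed.
Lemma kkD s r s' r' : kk u s r + kk u s' r' = kk u (s + s') (r + r').
Proof. by rewrite /kk !scalerDl addrACA. Qed.

Lemma kk_nrd_neq0 s r : (s != 0) || (r != 0) -> s ^+ 2 - d * r ^+ 2 != 0.
Proof.
case: (eqVneq r 0) => [->|nr] /=.
  by rewrite orbF expr0n /= mulr0 subr0 => h; rewrite expf_neq0.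
move=> _; apply/negP; rewrite subr_eq0 => /eqP e.
have := nsq (s / r); rewrite expr_div_n e mulfK ?expf_neq0 // eqxx //.
Qed.

Lemma nrd_anti_neq0 z : qmul z u = - qmul u z -> z != 0 -> nrd z != 0.
Proof.
move=> hz nz; apply/negP => /eqP n0.
have z0 := anticomm0 hz.
have trd0 : forall x, trd (qmul x z) = 0.
  move=> x.
  have ex : x = Pp x + Qm x by rewrite /Qm addrC subrK.
  rewrite [in qmul x z]ex qmulDl trdD.
  have h1 : trd (qmul (Pp x) z) = 0.
    rewrite /trd (@anticomm0 (qmul (Pp x) z)) ?mulr0 //.
    by rewrite -qmulA hz qmulNr qmulA Pp_comm -qmulA.
  have hw : qmul (qmul (Qm x) z) u = qmul u (qmul (Qm x) z).
    by rewrite -qmulA hz qmulNr qmulA Qm_anti qmulNl opprK -qmulA.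
  have [s [r ew]] := centr hw.
  have wz : qmul (qmul (Qm x) z) z = 0.
    by rewrite -qmulA pure_sq // n0 oppr0 scale0r qmul0r.
  case: (boolP ((s != 0) || (r != 0))) => hsr.
    exfalso; move/negP: nz; apply; apply/eqP.
    rewrite -[z]qmul1l -(kk_inv (kk_nrd_neq0 hsr)) -qmulA -ew wz qmul0r //.
  move: hsr; rewrite negb_or !negbK => /andP [/eqP s0 /eqP r0].
  by rewrite h1 ew s0 r0 /kk !scale0r addr0 trd0 addr0.
have t0 := trd0 (mkq 1 0 0 0); have t1 := trd0 (mkq 0 1 0 0);
have t2 := trd0 (mkq 0 0 1 0); have t3 := trd0 (mkq 0 0 0 1).
rewrite /trd /Defs.qmul !qcE in t0 t1 t2 t3.
move/negP: nz; apply; apply/eqP; apply: qext; rewrite qc0.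
- by [].
- move/eqP: t1; rewrite (_ : _ * _ = 2 * a * qc z 1); last by ring.
  by rewrite !mulf_eq0 (negbTE two0) (negbTE a0) /= => /eqP.
- move/eqP: t2; rewrite (_ : _ * _ = 2 * b * qc z 2); last by ring.
  by rewrite !mulf_eq0 (negbTE two0) (negbTE b0) /= => /eqP.
- move/eqP: t3; rewrite (_ : _ * _ = - (2 * a * b * qc z 3)); last by ring.
  by rewrite oppr_eq0 !mulf_eq0 (negbTE two0) (negbTE b0) (negbTE a0) /= => /eqP.
Qed.


Definition inB0 (s r : F) := vge 0 s && vge 0 (s ^+ 2 - d * r ^+ 2).

Lemma norm_ex_aux (m : nat) (c : F) : c != 0 -> (absz (2 * v c - 1)%R <= m)%N ->
  exists t, t != 0 /\ (v (t ^+ 2 * c) = 0 \/ v (t ^+ 2 * c) = 1).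
Proof.
have [pi [npi vpi]] : exists pi, pi != 0 /\ v pi = 1 by case: Hdv => _ [_ h].
elim: m c => [|m IH] c nc hm.
  exfalso; move: hm; lia.
case: (boolP ((v c == 0) || (v c == 1))) => h.
  by exists 1; rewrite oner_neq0 expr1n mul1r; split=> //; case/orP: h => /eqP ->; [left|right].
case: (lerP 2 (v c)) => h2.
  have nc' : c * (pi ^+ 2)^-1 != 0 by rewrite mulf_neq0 ?invr_eq0 ?expf_neq0.
  have vc' : v (c * (pi ^+ 2)^-1) = v c - 2.
    by rewrite vmul ?invr_eq0 ?expf_neq0 // vV ?expf_neq0 // vX // vpi.
  have [t [nt ht]] := IH _ nc' ltac:(rewrite vc'; move: hm; lia).
  exists (t / pi); split; first by rewrite mulf_neq0 ?invr_eq0.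
  have -> : (t / pi) ^+ 2 * c = t ^+ 2 * (c * (pi ^+ 2)^-1) by rewrite expr_div_n; ring.
  exact: ht.
move: h; rewrite negb_or => /andP [h0 h1].
have nc' : c * pi ^+ 2 != 0 by rewrite mulf_neq0 ?expf_neq0.
have vc' : v (c * pi ^+ 2) = v c + 2 by rewrite vmul ?expf_neq0 // vX // vpi.
have [t [nt ht]] : exists t, t != 0 /\ (v (t ^+ 2 * (c * pi ^+ 2)) = 0 \/ v (t ^+ 2 * (c * pi ^+ 2)) = 1).
  case: (eqVneq (v c) (-1)) => hm1.
    by exists 1; rewrite oner_neq0 expr1n mul1r vc' hm1; split=> //; right.
  apply: IH => //; rewrite vc'; move: hm h0 h1 h2 hm1; lia.
exists (t * pi); split; first by rewrite mulf_neq0.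
have -> : (t * pi) ^+ 2 * c = t ^+ 2 * (c * pi ^+ 2) by rewrite exprMn; ring.
exact: ht.
Qed.

Lemma norm_exists : exists t, t != 0 /\ (v (t ^+ 2 * d) = 0 \/ v (t ^+ 2 * d) = 1).
Proof. exact: (@norm_ex_aux _ d d_neq0 (leqnn _)). Qed.

Lemma anti_pure z : anti z -> qmul z z = (- nrd z) *: q1.
Proof. by move=> h; apply: pure_sq; apply: anticomm0. Qed.

Lemma trdq1 : trd q1 = 2.
Proof. by rewrite /trd /Defs.q1 qc_mkq0 mulr1. Qed.

Lemma trdZq1 c : trd (c *: q1) = 2 * c.
Proof. by rewrite trdZ trdq1 mulrC. Qed.

Lemma comm_u : comm u.
Proof. by []. Qed.

Lemma commZ c z : comm z -> comm (c *: z).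
Proof. by rewrite /comm => h; rewrite qmulZl qmulZr h. Qed.

Lemma antiZ c z : anti z -> anti (c *: z).
Proof. by rewrite /anti => h; rewrite qmulZl qmulZr h scalerN. Qed.

Definition mx4 (l : seq (seq F)) : 'M[F]_4 := \matrix_(i, j) (nth [::] l i)`_j.
Definition fam4 (p0 p1 p2 p3 : A) : 'I_4 -> A := fun i => [:: p0; p1; p2; p3]`_i.

Lemma sum4 (g : 'I_4 -> A) : \sum_j g j = g 0 + g 1 + g 2 + g 3.
Proof. by rewrite !big_ord_recl big_ord0 addr0 !addrA; congr (_ + _ + _ + _); congr (g _); apply: val_inj. Qed.

Lemma gram_det4 (t r : F) (q : A) : t != 0 -> anti q ->
  \det (Gram a b (fam4 q1 (t *: u) (r *: u + q) (qmul (t *: u) (r *: u + q))))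
  = - (16 * (t ^+ 2 * d) ^+ 2 * nrd q ^+ 2).
Proof.
move=> nt hq.
set lam := t *: u.
set c := r / t.
set dl := t ^+ 2 * d.
have hll : qmul lam lam = dl *: q1 by rewrite /lam qmulZl qmulZr hu !scalerA /dl expr2.
have clam : lam = kk u 0 t by rewrite /lam /kk scale0r add0r.
have cl : comm lam by rewrite clam; apply: kk_commP.
have alq : anti (qmul lam q) by apply: comm_anti.
have aq : anti q := hq.
have aql : qmul q lam = - qmul lam q by rewrite /lam qmulZl qmulZr hq scalerN.
pose g := fam4 q1 lam q (qmul lam q).
pose M := mx4 [:: [:: 1; 0; 0; 0]; [:: 0; 1; 0; 0]; [:: 0; c; 1; 0]; [:: c * dl; 0; 0; 1]].
have hf : forall i, fam4 q1 lam (r *: u + q) (qmul lam (r *: u + q)) i = \sum_j M i j *: g j.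
  move=> i; rewrite sum4 /M /mx4 /g /fam4 !mxE.
  have ru : r *: u = c *: lam by rewrite /lam scalerA /c divfK.
  case: i => [[|[|[|[|i]]]] hi] //=; rewrite ?scale0r ?scale1r ?addr0 ?add0r //.
  - by rewrite ru.
  - by rewrite ru qmulDr qmulZr hll scalerA.
have eG := gram_lin a b hf.
rewrite eG !det_mulmx det_tr.
have trM : is_trig_mx M.
  apply/is_trig_mxP => i j; rewrite /M /mx4 mxE.
  by case: i => [[|[|[|[|i]]]] hi] //=; case: j => [[|[|[|[|j]]]] hj] //=.
rewrite det_trig // !big_ord_recr big_ord0 /M /mx4 !mxE /= !mul1r.
have trG : is_trig_mx (Gram a b g).
  apply/is_trig_mxP => i j; rewrite /Gram mxE /g /fam4.
  case: i => [[|[|[|[|i]]]] hi] //=; case: j => [[|[|[|[|j]]]] hj] //= _.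
  - by rewrite qmul1l clam trd_kk mulr0.
  - by rewrite qmul1l trd_anti.
  - by rewrite qmul1l trd_anti.
  - by rewrite trd_anti //; apply: comm_anti.
  - by rewrite trd_anti //; apply: comm_anti.
  - rewrite qmulA aql qmulNl -qmulA anti_pure // qmulZr qmul1r.
    by rewrite -scaleNr trdZ clam trd_kk !mulr0.
rewrite det_trig // !big_ord_recr big_ord0 /Gram !mxE /g /fam4 /= mul1r.
rewrite qmul1l trdq1 hll trdZq1 anti_pure // trdZq1 anti_pure // trdZq1.
rewrite nrdM clam nrd_kk /dl.
ring.
Qed.

Lemma arithA (D T Dd Nq V16 : int) : 0 < D -> V16 = 0 -> T + T + Dd = 1 -> Nq = -1 ->
  D <= V16 + (T + T + Dd + (T + T + Dd)) + (Nq + Nq) -> False.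
Proof. lia. Qed.
Lemma arithB (x : int) : 0 <= x -> ~~ (1 <= x) -> x = 0.
Proof. lia. Qed.

Lemma sq_vge s : vge (-1) (s ^+ 2) -> vge 0 s.
Proof.
case: (eqVneq s 0) => [->|ns]; first by rewrite vge0x.
by rewrite !vgeE ?expf_neq0 // vX //; lia.
Qed.

Lemma v4 : v 4 = 0.
Proof. by rewrite (_ : 4 = 2 * 2 :> F) ?vmul ?two0 // ?v2' //; ring. Qed.

Lemma four0 : (4 : F) != 0.
Proof. by rewrite (_ : 4 = 2 * 2 :> F) ?mulf_neq0 ?two0 //; ring. Qed.

Section OneOrder.
Variable X : A -> Prop.
Variable e : 'I_4 -> A.
Hypothesis hb : is_Obasis v X e.
Hypothesis hmul : forall x y, X x -> X y -> X (qmul x y).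
Hypothesis hB0 : forall s r, inB0 s r -> X (kk u s r).

Lemma Xq1 : X q1.
Proof. rewrite q1_kk; apply: hB0; rewrite /inB0 vge1 expr1n expr0n /= mulr0 subr0 vge1 //. Qed.

Lemma Xpow z k : X z -> X (qpow z k).
Proof. by move=> hz; elim: k => [|k IH] /=; [apply: Xq1 | apply: hmul]. Qed.

Lemma nrd_pow z k : nrd (qpow z k) = nrd z ^+ k.
Proof.
elim: k => [|k IH] /=; first by rewrite expr0 /Defs.nrd /Defs.q1 !qcE; ring.
by rewrite nrdM IH exprS.
Qed.

Lemma F2 s r : X (kk u s r) -> inB0 s r.
Proof.
move=> hx.
set N := s ^+ 2 - d * r ^+ 2.
have eN : nrd (kk u s r) = N by rewrite nrd_kk.
have hN : vge 0 N.
  case: (eqVneq N 0) => [->|nN]; first exact: vge0x.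
  rewrite vgeE //; case: (lerP 0 (v N)) => // hneg.
  have [C hC] := nrd_bound Hdv a b hb.
  pose k := `|C|%N.+1.
  have := hC _ (Xpow k hx); rewrite nrd_pow eN vgeE ?expf_neq0 // vX //.
  rewrite /k -mulr_natr natz => hh; exfalso; nia.
rewrite /inB0 hN andbT.
case: (boolP ((s != 0) || (r != 0))) => hsr; last first.
  by move: hsr; rewrite negb_or negbK => /andP [/eqP -> _]; apply: vge0x.
have := vr_prop Hdv Hcomp Hnd nsq hsr; rewrite -/N.
case/orP => /andP [h1 h2] //.
have nN : N != 0 by apply: kk_nrd_neq0 hsr.
have vN0 : v N = 0.
  move: h2 hN; rewrite !vgeE ?invr_eq0 // vV //; lia.
case: (eqVneq s 0) => [->|ns]; first exact: vge0x.
move: h1; rewrite !vgeE ?mulf_neq0 ?invr_eq0 // vmul ?invr_eq0 // vV // vN0; lia.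
Qed.

Hypothesis hG : 0 < v (\det (Gram a b e)).

Lemma Struct x : X x -> X (Pp x).
Proof.
move=> hx.
have [t [nt ht]] := norm_exists.
set dl := t ^+ 2 * d.
have [s [r eP]] := centr (Pp_comm x).
have ndl : dl != 0 by rewrite mulf_neq0 ?expf_neq0 ?d_neq0.
have vdl : 0 <= v dl by case: ht => ->.
have elam : t *: u = kk u 0 t by rewrite /kk scale0r add0r.
have Xlam : X (t *: u).
  rewrite elam; apply: hB0; rewrite /inB0 vge0x /= expr0n /= sub0r vgeN mulrC -/dl.
  by rewrite vgeE.
set sg := 2 * t * (d * r).
have hw : X (kk u sg (2 * t * s)).
  have uk : qmul u (kk u s r) = kk u (d * r) s.
    by rewrite {1}u_kk kk_mul; congr kk; ring.
  have <- : qmul (t *: u) x + qmul x (t *: u) = kk u sg (2 * t * s).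
    by rewrite lam_id eP uk kkZ; congr kk; rewrite /sg; ring.
  by apply: (XD Hdv hb); apply: hmul.
have /andP [hs1 hs2] := F2 hw.
set Nx := s ^+ 2 - d * r ^+ 2.
have eNw : sg ^+ 2 - d * (2 * t * s) ^+ 2 = - (4 * dl) * Nx by rewrite /Nx /dl /sg; ring.
have n4dl : 4 * dl != 0 by rewrite mulf_neq0 ?four0.
have v4dl : v (4 * dl) = v dl by rewrite vmul ?four0 // v4 add0r.
have hNx : vge (- v dl) Nx.
  case: (eqVneq Nx 0) => [->|nNx]; first exact: vge0x.
  move: hs2; rewrite eNw !vgeE ?mulf_neq0 ?oppr_eq0 // vmul ?oppr_eq0 // vN v4dl; lia.
have edr : d * r ^+ 2 = sg ^+ 2 * (4 * dl)^-1.
  rewrite /sg /dl; field; by rewrite d_neq0 nt four0.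
have hdr : forall k, vge k sg -> vge (k + k - v dl) (d * r ^+ 2).
  move=> k hk; rewrite edr.
  have := vgeM (vgeX 2 hk) (vge_v v ((4 * dl)^-1)).
  rewrite vV // v4dl; apply: vge_le; lia.
have hs_of : vge (-1) Nx -> vge (-1) (d * r ^+ 2) -> vge 0 s.
  move=> h1 h2; apply: sq_vge.
  by rewrite (_ : s ^+ 2 = Nx + d * r ^+ 2); [apply: vgeD | rewrite /Nx; ring].
have XPp : inB0 s r -> X (Pp x) by move=> h; rewrite eP; apply: hB0.
case: ht => hdl.
  apply: XPp; rewrite /inB0.
  have h1 : vge 0 Nx by move: hNx; rewrite hdl oppr0.
  have h2 : vge 0 (d * r ^+ 2) by have := hdr 0 hs1; rewrite hdl.
  rewrite h1 andbT; apply: hs_of; [by apply: vge_le h1 | by apply: vge_le h2].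
have hNx1 : vge (-1) Nx by move: hNx; rewrite hdl.
case: (boolP (vge 1 sg)) => hsg.
  apply: XPp; rewrite /inB0.
  have h2 : vge 1 (d * r ^+ 2) by have := hdr 1 hsg; rewrite hdl.
  have hs : vge 0 s by apply: hs_of => //; apply: vge_le h2.
  rewrite hs /=.
  apply: vgeB; [apply: vgeX0 hs | apply: vge_le h2 => //].
exfalso.
have nsg : sg != 0 by apply/negP => /eqP h; move: hsg; rewrite h vge0x.
have vsg : v sg = 0 by move: hs1 hsg; rewrite !vgeE //; apply: arithB.
have ndr : d * r ^+ 2 != 0.
  rewrite edr mulf_neq0 ?expf_neq0 ?invr_eq0 //.
have vdr : v (d * r ^+ 2) = -1.
  by rewrite edr vmul ?expf_neq0 ?invr_eq0 // vX // vV // v4dl hdl vsg.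
have hs : vge 0 s by apply: hs_of => //; rewrite vgeE // vdr.
have Xs : X (s *: q1).
  have -> : s *: q1 = kk u s 0 by rewrite /kk scale0r addr0.
  by apply: hB0; rewrite /inB0 hs expr0n /= mulr0 subr0 vgeX0.
set q := Qm x.
have aq : anti q := Qm_anti x.
have ex' : x - s *: q1 = r *: u + q.
  rewrite /q /Qm eP /kk; apply: qext; rewrite !qcE; ring.
clearbody q.
have Xx' : X (r *: u + q) by rewrite -ex'; apply: (XB Hdv hb).
have ex2 : qmul (r *: u + q) (r *: u + q) = kk u (r ^+ 2 * d - nrd q) 0.
  rewrite qmulDl !qmulDr !qmulZl !qmulZr hu aq (anti_pure aq).
  move: (qmul u q) => U; rewrite /kk; apply: qext; rewrite !qcE; ring.
have X2 := hmul Xx' Xx'; rewrite ex2 in X2.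
have /andP [hq2 _] := F2 X2.
have ey : r ^+ 2 * d = d * r ^+ 2 by rewrite mulrC.
have [nNq vNq] : nrd q != 0 /\ v (nrd q) = -1.
  have h : vge (v (d * r ^+ 2) + 1) (- (d * r ^+ 2 - nrd q)).
    by rewrite vdr vgeN -ey.
  by have := vstrict ndr h; rewrite opprB addrC subrK vdr.
have hfX : forall i, X (fam4 q1 (t *: u) (r *: u + q) (qmul (t *: u) (r *: u + q)) i).
  case=> [[|[|[|[|i]]]] hi] //=; rewrite /fam4 /=;
    first [exact: Xq1 | exact: Xlam | exact: Xx' | exact: (hmul Xlam Xx')].
have := gram_sub Hdv a b hb hfX; rewrite gram_det4 //.
have n16 : (16 : F) != 0 by rewrite (_ : 16 = 4 * 4 :> F) ?mulf_neq0 ?four0 //; ring.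
have v16 : v 16 = 0 by rewrite (_ : 16 = 4 * 4 :> F) ?vmul ?four0 // ?v4 //; ring.
move: hdl; rewrite /dl !vmul ?mulf_neq0 ?expf_neq0 ?d_neq0 // => hdl'.
rewrite vgeN vgeE ?mulf_neq0 ?expf_neq0 ?d_neq0 ?n16 // !vmul ?mulf_neq0 ?expf_neq0 ?d_neq0 ?n16 // v16.
exact: (arithA hG (erefl (0:int)) hdl' vNq).
Qed.

End OneOrder.


Lemma anti_inv z : anti z -> z != 0 -> qmul ((- (nrd z)^-1) *: z) z = q1.
Proof.
move=> az nz; have nn := nrd_anti_neq0 az nz.
by rewrite qmulZl anti_pure // scalerA mulrN mulNr opprK mulVf // scale1r.
Qed.

Lemma anti_invA z : anti z -> anti ((- (nrd z)^-1) *: z).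
Proof. by move=> h; apply: antiZ. Qed.

Lemma inB0_inv s r : s ^+ 2 - d * r ^+ 2 != 0 ->
  vge 0 (s / (s ^+ 2 - d * r ^+ 2)) -> vge 0 ((s ^+ 2 - d * r ^+ 2)^-1) ->
  inB0 (s / (s ^+ 2 - d * r ^+ 2)) (- r / (s ^+ 2 - d * r ^+ 2)).
Proof.
move=> nN h1 h2; rewrite /inB0 h1 /=.
rewrite (_ : _ - _ = (s ^+ 2 - d * r ^+ 2)^-1) //; field; done.
Qed.

Lemma B0_integral s r : inB0 s r -> integral v a b (kk u s r).
Proof.
case/andP => h1 h2.
exists [:: s ^+ 2 - d * r ^+ 2; - (2 * s)]; split.
  move=> i; rewrite /= => hi; apply/OF_vge.
  case: i hi => [|[|i]] //= _.
  by rewrite vgeN; apply: vgeM0 => //; rewrite vgeE ?two0 // v2'.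
rewrite /= !big_ord_recr big_ord0 /= add0r qmul1r.
rewrite kk_mul /kk; apply: qext; rewrite !qcE; ring.
Qed.

Section Conj.
Variables (X : A -> Prop) (e : 'I_4 -> A) (g h : A).
Hypothesis hb : is_Obasis v X e.
Hypothesis hgh : qmul g h = q1.
Hypothesis hhg : qmul h g = q1.

Definition cj (x : A) := qmul (qmul g x) h.

Lemma cj_sum (c : 'I_4 -> F) : cj (\sum_i c i *: e i) = \sum_i c i *: cj (e i).
Proof.
rewrite /cj qmul_sumr qmul_suml; apply: eq_bigr => i _.
by rewrite qmulZr qmulZl.
Qed.

Lemma cj_inj x : cj x = 0 -> x = 0.
Proof.
move=> hx; have : qmul (qmul h (cj x)) g = x.
  by rewrite /cj !qmulA hhg qmul1l -qmulA hhg qmul1r.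
by rewrite hx qmul0r qmul0l.
Qed.

Lemma cj_basis : is_Obasis v (fun y => exists x, X x /\ y = cj x) (fun i => cj (e i)).
Proof.
case: hb => hind hrep; split.
  move=> c hc; apply: hind; apply: cj_inj; by rewrite cj_sum.
move=> y; split.
  case=> x [/hrep [c [hc ->]] ->]; exists c; split=> //; exact: cj_sum.
case=> c [hc ->]; exists (\sum_i c i *: e i); split; last by rewrite cj_sum.
by apply/hrep; exists c.
Qed.

Lemma trd_cj x : trd (cj x) = trd x.
Proof. by rewrite /cj trdC qmulA hhg qmul1l. Qed.

Lemma cj_mul x y : qmul (cj x) (cj y) = cj (qmul x y).
Proof. by rewrite /cj !qmulA -[qmul (qmul (qmul g x) h) g]qmulA hhg qmul1r -!qmulA. Qed.

Lemma gram_cj : Gram a b (fun i => cj (e i)) = Gram a b e.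
Proof. by apply/matrixP => i j; rewrite !mxE cj_mul trd_cj. Qed.

End Conj.

Section TwoOrders.
Variables X Y : A -> Prop.
Variables e e' : 'I_4 -> A.
Hypothesis hbX : is_Obasis v X e.
Hypothesis hbY : is_Obasis v Y e'.
Hypothesis hmulX : forall x y, X x -> X y -> X (qmul x y).
Hypothesis hmulY : forall x y, Y x -> Y y -> Y (qmul x y).
Hypothesis hB0X : forall s r, inB0 s r -> X (kk u s r).
Hypothesis hB0Y : forall s r, inB0 s r -> Y (kk u s r).

Lemma anti_incl : (forall z, anti z -> X z -> Y z) \/ (forall z, anti z -> Y z -> X z).
Proof.
case: (classic (forall z, anti z -> X z -> Y z)) => h; [by left | right].
have [z0 hz0] : exists z0, ~ (anti z0 -> X z0 -> Y z0).
  by apply: not_all_ex_not.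
have [az0 [Xz0 nYz0]] : anti z0 /\ X z0 /\ ~ Y z0 by tauto.
move=> z az Yz; apply: NNPP => nXz.
have nz0 : z0 != 0 by apply/negP => /eqP e0; apply: nYz0; rewrite e0; apply: (X0 Hdv hbY).
set iz := (- (nrd z0)^-1) *: z0.
have hi : qmul iz z0 = q1 := anti_inv az0 nz0.
have ck : comm (qmul z iz) by apply: anti_anti => //; apply: anti_invA.
have [s [r ek]] := centr ck.
have ez : z = qmul (kk u s r) z0 by rewrite -ek -qmulA hi qmul1r.
case: (boolP ((s != 0) || (r != 0))) => hsr; last first.
  move: hsr; rewrite negb_or !negbK => /andP [/eqP s0 /eqP r0].
  apply: nXz; rewrite ez s0 r0 /kk !scale0r addr0 qmul0l; apply: (X0 Hdv hbX).
have nN := kk_nrd_neq0 hsr.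
case/orP: (vr_prop Hdv Hcomp Hnd nsq hsr) => /andP [h1 h2].
  by apply: nXz; rewrite ez; apply: hmulX => //; apply: hB0X; rewrite /inB0 h1 h2.
apply: nYz0.
have -> : z0 = qmul (kk u (s / (s ^+ 2 - d * r ^+ 2)) (- r / (s ^+ 2 - d * r ^+ 2))) z.
  by rewrite ez qmulA kk_inv // qmul1l.
by apply: hmulY => //; apply: hB0Y; apply: inB0_inv.
Qed.

Hypothesis hGX : 0 < v (\det (Gram a b e)).
Hypothesis hGY : 0 < v (\det (Gram a b e')).

Lemma incl_of_anti (Z W : A -> Prop) (f f' : 'I_4 -> A) :
  is_Obasis v Z f -> is_Obasis v W f' ->
  (forall x y, Z x -> Z y -> Z (qmul x y)) ->
  (forall s r, inB0 s r -> Z (kk u s r)) ->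
  (forall s r, inB0 s r -> W (kk u s r)) ->
  0 < v (\det (Gram a b f)) ->
  (forall z, anti z -> Z z -> W z) -> forall x, Z x -> W x.
Proof.
move=> hZ hW hmZ hBZ hBW hG hanti x hx.
have hP := Struct hZ hmZ hBZ hG hx.
have [s [r eP]] := centr (Pp_comm x).
have hq : Z (Qm x) by apply: (XB Hdv hZ).
have ex : x = Pp x + Qm x by rewrite /Qm addrC subrK.
rewrite ex; apply: (XD Hdv hW); last by apply: hanti => //; apply: Qm_anti.
rewrite eP; apply: hBW; apply: (F2 hZ hmZ hBZ); rewrite -eP //.
Qed.

Hypothesis hdetX : \det (Gram a b e) != 0.
Hypothesis hdetY : \det (Gram a b e') != 0.
Hypothesis hdet : v (\det (Gram a b e)) = v (\det (Gram a b e')).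

Lemma orders_eq x : X x <-> Y x.
Proof.
case: anti_incl => h.
  have XY := incl_of_anti hbX hbY hmulX hB0X hB0Y hGX h.
  split; first exact: XY.
  exact: (index_eq Hdv hbX hbY XY hdetX hdetY hdet).
have YX := incl_of_anti hbY hbX hmulY hB0Y hB0X hGY h.
split; last exact: YX.
exact: (index_eq Hdv hbY hbX YX hdetY hdetX (esym hdet)).
Qed.

End TwoOrders.

End Ord.

Theorem lemma4p2p1 (F : fieldType) (v : F -> int) (a b : F)
    (O : 'rV[F]_4 -> Prop) (d : F) (u : 'rV[F]_4) :
  nonarch_local_field v -> nondyadic v -> a != 0 -> b != 0 ->
  Bass v a b O -> eichler_zero v a b O ->
  (exists n : int, nrd_disc_val v a b O n /\ 3 <= n) ->
  (forall t : F, t ^+ 2 != d) ->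
  optimal_emb v a b d O u ->
  (forall c : F, (exists g, in_normalizer a b O g /\ nrd a b g = c) <-> normK d c) ->
  forall c : F, (exists g, in_E v a b O u g /\ nrd a b g = c) <-> normK d c.
Proof.
move=> Hloc Hnd a0 b0 HBass _ [n [[e [hbO [hdet hv]]] hn]] nsq [hu hopt] Hnorm c.
case: Hloc => Hdv Hcomp _.
case: HBass => [[_ [_ HmulO]] _].
have phk : forall s r, phiK u (kk u s r) by move=> s r; exists s, r.
have hB0O : forall s r, inB0 v d s r -> O (kk u s r).
  by move=> s r hsr; apply/(hopt _ (phk s r)); apply: (B0_integral Hdv Hnd hu nsq hsr).
have hGO : 0 < v (\det (Gram a b e)) by rewrite hv; lia.
split.
- case=> g [[h [hgh [hhg hE]]] <-].
  apply/Hnorm; exists g; split=> //; exists h; split=> //; split=> //.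
  pose Y := fun y => exists x, O x /\ y = cj a b g h x.
  have hbY : is_Obasis v Y (fun i => cj a b g h (e i)) := cj_basis hbO hhg.
  have hmulY : forall x y, Y x -> Y y -> Y (qmul a b x y).
    move=> x y [x1 [h1 ->]] [y1 [h2 ->]]; exists (qmul a b x1 y1); split; first exact: HmulO.
    by rewrite cj_mul.
  have hB0Y : forall s r, inB0 v d s r -> Y (kk u s r).
    move=> s r hsr; apply/(hE _ (phk s r)); apply: (B0_integral Hdv Hnd hu nsq hsr).
  have hG := gram_cj e hhg.
  move=> y; symmetry.
  apply: (orders_eq Hdv Hnd Hcomp a0 b0 hu nsq hbO hbY HmulO hmulY hB0O hB0Y hGO).
  + by rewrite hG.
  + exact: hdet.
  + by rewrite hG.
  + by rewrite hG.
- move/Hnorm => [g [[h [hgh [hhg hN]]] <-]].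
  exists g; split=> //; exists h; split=> //; split=> //.
  move=> y hy; rewrite hN; exact: hopt.
Qed.
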